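(* The operator $(H_3f)(t)=\int_0^1\left(1+\frac12\sqrt[7]{4\left(t-\frac12\right)\left(u-\frac12\right)}\right)f^3(u)\,du$ on $C[0,1]$ has at least two distinct strictly positive fixed points.
   Context: For real $s$, $\sqrt[7]{s}$ denotes the real seventh root (negative for $s<0$). *)

(* Defs.v *)
From Stdlib Require Import Reals.
Open Scope R_scope.

Definition root7 (s : R) : R :=
  match Rlt_dec 0 s with
  | left _ => Rpower s (1/7)
  | right _ =>
      match Rlt_dec s 0 with
      | left _ => - Rpower (- s) (1/7)
      | right _ => 0
      end
  end.

Definition K3 (t u : R) : R := 1 + (1/2) * root7 (4 * (t - 1/2) * (u - 1/2)).

Definition H3_integrand (f : R -> R) (t : R) : R -> R :=
  fun u => K3 t u * (f u) ^ 3.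

Definition is_H3_fixed_point (f : R -> R) : Prop :=
  forall t, 0 <= t <= 1 ->
    exists pr : Riemann_integrable (H3_integrand f t) 0 1,
      f t = RiemannInt pr.

(* Main.v *)
Require Import Defs.
From Coquelicot Require Import Coquelicot.
From Stdlib Require Import Reals Lra Lia Psatz.
Open Scope R_scope.

Lemma powS_lt_nonneg n x y : 0 <= x < y -> x ^ (S n) < y ^ (S n).
Proof.
  intros [H0 H1]. induction n.
  - simpl; lra.
  - change (x ^ S (S n)) with (x * x ^ S n). change (y ^ S (S n)) with (y * y ^ S n).
    assert (0 <= x ^ S n) by (apply pow_le; lra).
    nra.
Qed.

Lemma pow7_lt x y : x < y -> x ^ 7 < y ^ 7.
Proof.
  intros H.
  destruct (Rle_dec 0 x).
  - apply (powS_lt_nonneg 6); lra.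
  - destruct (Rle_dec y 0).
    + assert ((-y) ^ 7 < (-x) ^ 7) by (apply (powS_lt_nonneg 6); lra).
      replace ((-y)^7) with (- y^7) in H0 by ring.
      replace ((-x)^7) with (- x^7) in H0 by ring. lra.
    + assert (0 < y ^ 7) by (apply pow_lt; lra).
      assert (0 < (-x) ^ 7) by (apply pow_lt; lra).
      replace ((-x)^7) with (- x^7) in H1 by ring. lra.
Qed.

Lemma pow7_inj x y : x ^ 7 = y ^ 7 -> x = y.
Proof.
  intros H. destruct (Rtotal_order x y) as [h|[h|h]]; auto.
  - apply pow7_lt in h; lra.
  - apply pow7_lt in h; lra.
Qed.

Lemma Rpower7 s : 0 < s -> Rpower s (1/7) ^ 7 = s.
Proof.
  intros Hs.
  rewrite <- Rpower_pow by (unfold Rpower; apply exp_pos).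
  rewrite Rpower_mult. replace (1/7 * INR 7) with 1 by (simpl; field).
  apply Rpower_1; auto.
Qed.

Lemma root7_pow s : root7 s ^ 7 = s.
Proof.
  unfold root7. destruct (Rlt_dec 0 s).
  - apply Rpower7; auto.
  - destruct (Rlt_dec s 0).
    + replace ((- Rpower (- s) (1 / 7)) ^ 7) with (- (Rpower (- s) (1 / 7) ^ 7)) by ring.
      rewrite Rpower7; lra.
    + simpl; lra.
Qed.

Lemma root7_of_pow w : root7 (w ^ 7) = w.
Proof. apply pow7_inj. apply root7_pow. Qed.

Lemma root7_lt x y : x < y -> root7 x < root7 y.
Proof.
  intros H. destruct (Rlt_dec (root7 x) (root7 y)); auto.
  assert (root7 y <= root7 x) by lra.
  destruct (Req_dec (root7 y) (root7 x)) as [e|ne].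
  - assert (root7 y ^ 7 = root7 x ^ 7) by (rewrite e; auto).
    rewrite !root7_pow in H1. lra.
  - assert (root7 y ^ 7 < root7 x ^ 7) by (apply pow7_lt; lra).
    rewrite !root7_pow in H1. lra.
Qed.

Lemma root7_le x y : x <= y -> root7 x <= root7 y.
Proof.
  intros H. destruct (Req_dec x y). subst; lra. left; apply root7_lt; lra.
Qed.

Lemma root7_mul x w : root7 (x * w ^ 7) = root7 x * w.
Proof.
  apply pow7_inj. rewrite root7_pow. rewrite Rpow_mult_distr, root7_pow. auto.
Qed.

Lemma root7_cont x : continuity_pt root7 x.
Proof.
  apply continuity_pt_locally. intros eps.
  set (a := root7 x).
  assert (H1 : x < (a + eps) ^ 7).
  { unfold a. rewrite <- (root7_pow x) at 1. apply pow7_lt. destruct eps; simpl; lra. }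
  assert (H2 : (a - eps) ^ 7 < x).
  { unfold a. rewrite <- (root7_pow x) at 2. apply pow7_lt. destruct eps; simpl; lra. }
  assert (Hd : 0 < Rmin ((a + eps) ^ 7 - x) (x - (a - eps) ^ 7)).
  { apply Rmin_pos; lra. }
  exists (mkposreal _ Hd). intros y Hy.
  change (Rabs (y - x) < Rmin ((a + eps) ^ 7 - x) (x - (a - eps) ^ 7)) in Hy.
  apply Rabs_lt_between in Hy.
  pose proof (Rmin_l ((a + eps) ^ 7 - x) (x - (a - eps) ^ 7)).
  pose proof (Rmin_r ((a + eps) ^ 7 - x) (x - (a - eps) ^ 7)).
  assert (root7 y < a + eps).
  { rewrite <- (root7_of_pow (a + eps)). apply root7_lt. lra. }
  assert (a - eps < root7 y).
  { rewrite <- (root7_of_pow (a - eps)). apply root7_lt. lra. }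
  fold a. apply Rabs_def1; lra.
Qed.

Lemma cp_mult f g x : continuity_pt f x -> continuity_pt g x -> continuity_pt (fun u => f u * g u) x.
Proof. apply continuity_pt_mult. Qed.
Lemma cp_plus f g x : continuity_pt f x -> continuity_pt g x -> continuity_pt (fun u => f u + g u) x.
Proof. apply continuity_pt_plus. Qed.
Lemma cp_const c x : continuity_pt (fun _ => c) x.
Proof. apply continuity_pt_const. intros ? ?; auto. Qed.
Lemma cp_root7 f x : continuity_pt f x -> continuity_pt (fun u => root7 (f u)) x.
Proof. intros H. apply (continuity_pt_comp f root7); auto. apply root7_cont. Qed.
Lemma cp_pow f n x : continuity_pt f x -> continuity_pt (fun u => f u ^ n) x.
Proof. intros H. induction n; simpl. apply cp_const. apply cp_mult; auto. Qed.

Definition m := root7 (1/2).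
Definition r4 := root7 4.

Lemma m7 : m ^ 7 = 1/2.
Proof. apply root7_pow. Qed.
Lemma m_pos : 0 < m.
Proof. unfold m. rewrite <- (root7_of_pow 0). apply root7_lt. simpl; lra. Qed.
Lemma r4m : r4 * m ^ 2 = 1.
Proof.
  apply pow7_inj. rewrite Rpow_mult_distr. unfold r4. rewrite root7_pow.
  rewrite <- pow_mult. replace (2*7)%nat with (7*2)%nat by lia. rewrite pow_mult, m7. simpl; lra.
Qed.

Definition fa (a b : R) u := a + b * root7 (u - 1/2) / m.

Definition P (a k h w : R) :=
  a^3*w^7 + 21/8*a^2*k*w^8 + 7/3*a*k^2*w^9 + 7/10*k^3*w^10
  + 7*h*(a^3*w^8/8 + a^2*k*w^9/3 + 3/10*a*k^2*w^10 + k^3*w^11/11).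
Definition Q (a k h w : R) := 7 * w^6 * ((1 + h * w) * (a + k * w)^3).

Lemma P_der a k h w : is_derive (P a k h) w (Q a k h w).
Proof. unfold P, Q. auto_derive; auto. simpl. field. Qed.

Lemma fixed a b (H1 : a^2 + 7/3*b^2 = 1) (H2 : b*(7/6*a^2 + 7/22*b^2) = b) :
  is_H3_fixed_point (fa a b).
Proof.
  pose proof m_pos as Hm.
  intros t Ht.
  set (F := H3_integrand (fa a b) t).
  assert (HF : forall u, continuity_pt F u).
  { intros u. unfold F, H3_integrand, K3, fa. apply cp_mult.
    - apply cp_plus. apply cp_const. apply cp_mult. apply cp_const.
      apply cp_root7. apply cp_mult. apply cp_const. apply cp_plus. apply continuity_pt_id. apply cp_const.
    - apply cp_pow. apply cp_plus. apply cp_const. apply cp_mult. apply cp_mult. apply cp_const.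
      apply cp_root7. apply cp_plus. apply continuity_pt_id. apply cp_const. apply cp_const. }
  exists (@continuity_implies_RiemannInt F 0 1 ltac:(lra) (fun x _ => HF x)).
  rewrite <- RInt_Reals.
  assert (Hc := is_RInt_comp F (fun w => 1/2 + w^7) (fun w => 7 * w^6) (-m) m
     (fun x _ => proj1 (continuity_pt_filterlim _ _) (HF _))
     (fun x _ => conj (ltac:(auto_derive; auto; ring) : is_derive (fun w => 1/2 + w^7) x (7 * x^6))
                      (ex_derive_continuous (fun w => 7 * w^6) x ltac:(auto_derive; auto)))).
  cbv beta in Hc.
  replace (1/2 + (-m)^7) with 0 in Hc by (replace ((-m)^7) with (-(m^7)) by ring; rewrite m7; lra).
  replace (1/2 + m^7) with 1 in Hc by (rewrite m7; lra).
  set (Rt := root7 (4 * (t - 1/2))).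
  set (k := b / m). set (h := Rt / 2).
  assert (Hc' : is_RInt (Q a k h) (-m) m (RInt F 0 1)).
  { revert Hc. apply is_RInt_ext. intros w _.
    change (scal (7*w^6) (F (1/2+w^7))) with (7*w^6 * F(1/2+w^7)). unfold F, H3_integrand, K3, fa, Q.
    replace (4 * (t - 1/2) * (1/2 + w^7 - 1/2)) with ((4 * (t - 1/2)) * w^7) by ring.
    rewrite root7_mul. replace (1/2 + w^7 - 1/2) with (w^7) by ring. rewrite root7_of_pow.
    fold Rt. unfold k, h. match goal with |- ?x = ?y => change (@eq R x y) end. field. lra. }
  assert (Hd : is_RInt (Q a k h) (-m) m (minus (P a k h m) (P a k h (-m)))).
  { apply (is_RInt_derive (P a k h) (Q a k h)). intros; apply P_der. intros; apply (ex_derive_continuous (Q a k h)).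
    unfold Q; auto_derive; auto. }
  apply (@is_RInt_unique R_CompleteNormedModule) in Hc'. apply (@is_RInt_unique R_CompleteNormedModule) in Hd.
  rewrite <- Hc', Hd. unfold minus, plus, opp; simpl.
  assert (HR : Rt = root7 (t - 1/2) * r4).
  { unfold Rt, r4. rewrite <- root7_mul. f_equal. rewrite root7_pow. ring. }
  assert (E : P a k h m + - P a k h (-m) =
     2 * m^7 * (a * (a^2 + 7/3*b^2)) + 2 * m^7 * (Rt * m^2 * m) * (b * (7/6*a^2 + 7/22*b^2))/ m^2).
  { unfold P, k, h. field. lra. }
  rewrite E, H1, H2, m7, HR. unfold fa.
  replace (root7 (t - 1/2) * r4 * m^2 * m) with (root7 (t - 1/2) * (r4 * m^2) * m) by ring.
  rewrite r4m. field. lra.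
Qed.

Lemma fa_cont a b x : continuity_pt (fa a b) x.
Proof.
  unfold fa. apply cp_plus. apply cp_const. apply cp_mult. apply cp_mult. apply cp_const.
  apply cp_root7. apply cp_plus. apply continuity_pt_id. apply cp_const. apply cp_const.
Qed.

Lemma rm_half : root7 (-(1/2)) = - m.
Proof. rewrite <- m7. replace (-(m^7)) with ((-m)^7) by ring. apply root7_of_pow. Qed.

Lemma g_bound x : 0 <= x <= 1 -> - m <= root7 (x - 1/2) <= m.
Proof.
  intros H. split.
  - rewrite <- rm_half. apply root7_le. lra.
  - unfold m. apply root7_le. lra.
Qed.

Theorem proposition4p1 :
  exists f1 f2 : R -> R,
    (forall x, 0 <= x <= 1 -> continuity_pt f1 x) /\
    (forall x, 0 <= x <= 1 -> continuity_pt f2 x) /\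
    (forall x, 0 <= x <= 1 -> 0 < f1 x) /\
    (forall x, 0 <= x <= 1 -> 0 < f2 x) /\
    is_H3_fixed_point f1 /\ is_H3_fixed_point f2 /\
    (exists x, 0 <= x <= 1 /\ f1 x <> f2 x).
Proof.
  set (a := sqrt (399/476)). set (b := sqrt (33/476)).
  assert (Ha2 : a^2 = 399/476) by (apply pow2_sqrt; lra).
  assert (Hb2 : b^2 = 33/476) by (apply pow2_sqrt; lra).
  assert (Hb : 0 < b) by (apply sqrt_lt_R0; lra).
  assert (Hab : b < a) by (apply sqrt_lt_1; lra).
  assert (Ha1 : a < 1).
  { rewrite <- sqrt_1. apply sqrt_lt_1; lra. }
  pose proof m_pos as Hm.
  exists (fa 1 0), (fa a b).
  split; [intros; apply fa_cont|].
  split; [intros; apply fa_cont|].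
  split; [intros; unfold fa; replace (1 + 0 * root7 (x - 1/2) / m) with 1 by (field; lra); lra|].
  split.
  { intros x Hx. unfold fa. pose proof (g_bound x Hx).
    assert (b * root7 (x - 1/2) / m >= - b).
    { apply Rle_ge. apply (Rmult_le_reg_r m); auto. unfold Rdiv. rewrite Rmult_assoc, Rinv_l by lra. nra. }
    lra. }
  split. { apply fixed; nra. }
  split. { apply fixed; nra. }
  exists 0. split. lra. unfold fa.
  replace (0 - 1/2) with (-(1/2)) by ring. rewrite rm_half.
  replace (1 + 0 * - m / m) with 1 by (field; lra).
  replace (a + b * - m / m) with (a - b) by (field; lra). lra.
Qed.
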